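(* Let $p:X\to Y$ be a covering map with finite fibers and with $X$ Hausdorff. Then every open cover $\mathcal V$ of $X$ has a refinement that is a covering structure of $p$.
   Context: A covering map $p:X\to Y$ is a continuous surjection such that every point of $Y$ has an open neighborhood $V$ with $p^{-1}(V)$ a disjoint union of open sets each mapped homeomorphically onto $V$. A slice of $p$ is an open set $U\subseteq X$ such that $p^{-1}(p(U))$ is the disjoint union of a family of open sets $U_s$ ($s\in S$), each mapped by $p$ homeomorphically onto $p(U)$, with $U=U_t$ for some $t\in S$. A covering structure of $p$ is an open cover $\mathcal S$ of $X$ by slices of $p$ such that for every $U\in\mathcal S$, $p^{-1}(p(U))$ is the disjoint union of a family $\{U_j\}_{j\in J}$ of elements of $\mathcal S$, each mapped homeomorphically onto $p(U)$. A refinement of $\mathcal V$ is an open cover each of whose elements is contained in some element of $\mathcal V$. *)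

(* Defs.v *)
From Stdlib Require Import List.

Set Implicit Arguments.

Record topology (X : Type) := Topology {
  is_open : (X -> Prop) -> Prop;
  open_full : is_open (fun _ => True);
  open_inter : forall U V, is_open U -> is_open V -> is_open (fun x => U x /\ V x);
  open_union : forall F : (X -> Prop) -> Prop,
      (forall U, F U -> is_open U) -> is_open (fun x => exists U, F U /\ U x)
}.

Section TopDefs.
Variables (X Y : Type) (TX : topology X) (TY : topology Y).

Definition continuous (f : X -> Y) : Prop :=
  forall V, is_open TY V -> is_open TX (fun x => V (f x)).

Definition hausdorff : Prop :=
  forall x y : X, x <> y -> exists U V, is_open TX U /\ is_open TX V /\ U x /\ V y /\
    (forall z, ~ (U z /\ V z)).

Definition image (f : X -> Y) (U : X -> Prop) : Y -> Prop :=
  fun y => exists x, U x /\ f x = y.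

(* p maps U homeomorphically onto V (subspace topologies on U and V):
   p|U is a bijection U -> V, continuous, with continuous inverse. *)
Definition maps_homeo_onto (p : X -> Y) (U : X -> Prop) (V : Y -> Prop) : Prop :=
  (forall x x', U x -> U x' -> p x = p x' -> x = x') /\
  (forall y, V y <-> image p U y) /\
  (forall W, is_open TY W -> exists O, is_open TX O /\
      forall x, U x -> (W (p x) <-> O x)) /\
  (forall O, is_open TX O -> exists W, is_open TY W /\
      forall y, V y -> (image p (fun x => U x /\ O x) y <-> W y)).

Definition open_disjoint_union (A : X -> Prop) (S : Type) (Us : S -> X -> Prop) : Prop :=
  (forall s, is_open TX (Us s)) /\
  (forall x, A x <-> exists s, Us s x) /\
  (forall s t x, Us s x -> Us t x -> s = t).

Definition covering_map (p : X -> Y) : Prop :=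
  continuous p /\ (forall y, exists x, p x = y) /\
  forall y, exists V, is_open TY V /\ V y /\
    exists (S : Type) (Us : S -> X -> Prop),
      open_disjoint_union (fun x => V (p x)) Us /\
      forall s, maps_homeo_onto p (Us s) V.

Definition finite_fibers (p : X -> Y) : Prop :=
  forall y, exists l : list X, forall x, p x = y -> In x l.

Definition is_slice (p : X -> Y) (U : X -> Prop) : Prop :=
  is_open TX U /\
  exists (S : Type) (Us : S -> X -> Prop) (t : S),
    open_disjoint_union (fun x => image p U (p x)) Us /\
    (forall s, maps_homeo_onto p (Us s) (image p U)) /\
    (forall x, Us t x <-> U x).

Definition open_cover (C : (X -> Prop) -> Prop) : Prop :=
  (forall U, C U -> is_open TX U) /\ (forall x, exists U, C U /\ U x).

Definition covering_structure (p : X -> Y) (C : (X -> Prop) -> Prop) : Prop :=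
  open_cover C /\ (forall U, C U -> is_slice p U) /\
  forall U, C U -> exists (J : Type) (Uj : J -> X -> Prop),
    (forall j, C (Uj j)) /\
    open_disjoint_union (fun x => image p U (p x)) Uj /\
    (forall j, maps_homeo_onto p (Uj j) (image p U)).

Definition refinement (W Vc : (X -> Prop) -> Prop) : Prop :=
  open_cover W /\ forall U, W U -> exists V, Vc V /\ forall x, U x -> V x.

End TopDefs.

(* Main.v *)
Require Import Defs.
From Stdlib Require Import List Classical.

Lemma homeo_restrict (X Y : Type) (TX : topology X) (TY : topology Y) (p : X -> Y)
  (S : X -> Prop) (V W W' : Y -> Prop) :
  maps_homeo_onto TX TY p S V -> (forall y, W y -> V y) -> (forall y, W' y <-> W y) ->
  maps_homeo_onto TX TY p (fun z => S z /\ W (p z)) W'.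
Proof.
  intros [Hinj [Him [Hc Ho]]] HWV HW'.
  split; [|split; [|split]].
  - intros x x' [Hx _] [Hx' _] E. eauto.
  - intro y. split.
    + intros Hy. apply HW' in Hy. destruct (proj1 (Him y) (HWV y Hy)) as [z [Hz Ez]].
      exists z. subst. auto.
    + intros [z [[Hz Hwz] Ez]]. apply HW'. subst; auto.
  - intros W2 HW2. destruct (Hc W2 HW2) as [O [HO HOp]]. exists O; split; auto.
    intros x [Hx _]. auto.
  - intros O HO. destruct (Ho O HO) as [W2 [HW2 HW2p]]. exists W2. split; auto.
    intros y Hy. apply HW' in Hy. specialize (HW2p y (HWV y Hy)). split.
    + intros [z [[[Hz Hwz] Hoz] Ez]]. apply HW2p. exists z. auto.
    + intros H. apply HW2p in H. destruct H as [z [[Hz Hoz] Ez]]. exists z. subst. auto.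
Qed.

Lemma fin_inter (X Y : Type) (TY : topology Y) (y : Y) (Q : X -> (Y -> Prop) -> Prop)
  (l : list X) :
  (forall x, exists O, is_open TY O /\ O y /\ Q x O) ->
  exists W, is_open TY W /\ W y /\ forall x, In x l -> exists O, Q x O /\ forall y', W y' -> O y'.
Proof.
  induction l as [|a l IHl]; intros H.
  - exists (fun _ => True). split; [apply open_full|split; [exact I|]]. intros x [].
  - destruct IHl as [W [HW [Wy HWp]]]; [exact H|]. destruct (H a) as [O [HO [Oy HQ]]].
    exists (fun y' => O y' /\ W y'). split; [apply open_inter; auto|split;[auto|]].
    intros x [E|Hin].
    + subst. exists O. split; auto. intros y' [? ?]; auto.
    + destruct (HWp x Hin) as [O' [HQ' HO']]. exists O'. split; auto. intros y' [? ?]; auto.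
Qed.

Definition Good (X Y : Type) (TX : topology X) (TY : topology Y) (p : X -> Y)
  (Vc : (X -> Prop) -> Prop) (V : Y -> Prop) (S : Type) (Us : S -> X -> Prop) (W : Y -> Prop) : Prop :=
  is_open TY V /\ open_disjoint_union TX (fun x => V (p x)) Us /\
  (forall s, maps_homeo_onto TX TY p (Us s) V) /\ is_open TY W /\
  (forall y', W y' -> V y') /\
  (forall s, exists A, Vc A /\ forall z, Us s z -> W (p z) -> A z).

Arguments Good {X Y}.

Lemma key (X Y : Type) (TX : topology X) (TY : topology Y) (p : X -> Y) (Vc : (X -> Prop) -> Prop) :
  (forall y, exists V, is_open TY V /\ V y /\
    exists (S : Type) (Us : S -> X -> Prop),
      open_disjoint_union TX (fun x => V (p x)) Us /\
      forall s, maps_homeo_onto TX TY p (Us s) V) ->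
  finite_fibers p ->
  (forall U, Vc U -> is_open TX U) -> (forall x, exists U, Vc U /\ U x) ->
  forall y, exists V S Us W, Good TX TY p Vc V S Us W /\ V y /\ W y.
Proof.
  intros Hcov Hfin HVco HVcc y.
  destruct (Hcov y) as [V [HV [Vy [S [Us [HU Hh]]]]]].
  pose proof HU as HU'. destruct HU' as [HUo [HUc HUd]].
  assert (Hx : forall x, exists O, is_open TY O /\ O y /\ (p x = y -> exists A, Vc A /\
     forall s z, Us s x -> Us s z -> O (p z) -> A z)).
  { intro x. destruct (classic (p x = y)) as [E|NE].
    - destruct (HVcc x) as [A [HA Ax]].
      destruct (proj1 (HUc x)) as [s0 Hs0]. { rewrite E; exact Vy. }
      destruct (Hh s0) as [Hinj [Him [_ Ho]]].
      destruct (Ho A (HVco A HA)) as [W2 [HW2 HW2p]].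
      exists W2. split; [exact HW2|split].
      + apply HW2p; [exact Vy|]. exists x. auto.
      + intros _. exists A. split; [exact HA|]. intros s z Hsx Hsz Hwz.
        assert (s = s0) by exact (HUd s s0 x Hsx Hs0). subst s.
        assert (Vz : V (p z)) by (apply HUc; eauto).
        destruct (proj2 (HW2p (p z) Vz) Hwz) as [z' [[Hz' Az'] Ez']].
        rewrite (Hinj z z' Hsz Hz' (eq_sym Ez')). exact Az'.
    - exists (fun _ => True). split; [apply open_full|split; [exact I|]]. intro; contradiction. }
  destruct (Hfin y) as [l Hl].
  destruct (fin_inter X Y TY y _ l Hx) as [Wl [HWl [Wly HWlp]]].
  exists V, S, Us, (fun y' => V y' /\ Wl y'). split; [|split; [exact Vy| split; auto]].
  split; [exact HV|split;[exact HU|split; [exact Hh|split;[apply open_inter; auto|split]]]].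
  - intros y' [H _]; exact H.
  - intro s. destruct (Hh s) as [_ [Him _]]. destruct (proj1 (Him y) Vy) as [x [Hxs Ex]].
    destruct (HWlp x (Hl x Ex)) as [O [HQ HWO]].
    destruct (HQ Ex) as [A [HA HAp]]. exists A. split; auto. intros z Hz [_ Hwz]. eapply HAp; eauto.
Qed.

Theorem lemma4p10 (X Y : Type) (TX : topology X) (TY : topology Y) (p : X -> Y) :
  covering_map TX TY p -> finite_fibers p -> hausdorff TX ->
  forall Vc : (X -> Prop) -> Prop, open_cover TX Vc ->
  exists C : (X -> Prop) -> Prop, refinement TX C Vc /\ covering_structure TX TY p C.
Proof.
  intros [Hcont [_ Hcov]] Hfin _ Vc [HVco HVcc].
  pose proof (key X Y TX TY p Vc Hcov Hfin HVco HVcc) as Hkey.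
  set (C := fun U : X -> Prop => exists V S Us W s, Good TX TY p Vc V S Us W /\
                                   U = (fun z => Us s z /\ W (p z))).
  assert (Copen : forall U, C U -> is_open TX U).
  { intros U [V [S [Us [W [s [HG ->]]]]]].
    destruct HG as [HVo [[HUo [HUc HUd]] [Hh [HWo [HWV Href]]]]].
    apply open_inter; [apply HUo| apply Hcont; exact HWo]. }
  assert (Ccov : forall x, exists U, C U /\ U x).
  { intro x. destruct (Hkey (p x)) as [V [S [Us [W [HG [Vy Wy]]]]]].
    pose proof HG as HG'.
    destruct HG' as [HVo [[HUo [HUc HUd]] [Hh [HWo [HWV Href]]]]].
    destruct (proj1 (HUc x) Vy) as [s Hs].
    exists (fun z => Us s z /\ W (p z)). split.
    - exists V, S, Us, W, s. split; auto.
    - split; auto. }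
  assert (Cslice : forall U, C U -> exists (S : Type) (Us' : S -> X -> Prop) (t : S),
     (forall j, C (Us' j)) /\
     open_disjoint_union TX (fun x => image p U (p x)) Us' /\
     (forall s, maps_homeo_onto TX TY p (Us' s) (image p U)) /\
     (forall x, Us' t x <-> U x)).
  { intros U [V [S [Us [W [s [HG EU]]]]]].
    pose proof HG as HG'.
    destruct HG' as [HVo [[HUo [HUc HUd]] [Hh [HWo [HWV Href]]]]].
    exists S, (fun s' z => Us s' z /\ W (p z)), s. subst U.
    assert (Him : forall y', image p (fun z => Us s z /\ W (p z)) y' <-> W y').
    { intro y'. split.
      - intros [z [[_ Hw] E]]. subst. auto.
      - intros Hw. destruct (Hh s) as [_ [Hi _]].
        destruct (proj1 (Hi y') (HWV y' Hw)) as [z [Hz Ez]]. exists z. subst. auto. }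
    split; [|split; [|split]].
    - intro j. exists V, S, Us, W, j. split; auto.
    - split; [|split].
      + intro s'. apply open_inter; [apply HUo| apply Hcont; exact HWo].
      + intro x. cbv beta. rewrite Him. split.
        * intros Hw. destruct (proj1 (HUc x) (HWV _ Hw)) as [s' Hs']. exists s'; auto.
        * intros [s' [_ Hw]]; auto.
      + intros s1 s2 x [H1 _] [H2 _]. eapply HUd; eauto.
    - intro s'. apply homeo_restrict with V; auto.
    - intro x; tauto. }
  exists C. split.
  - split; [split; [exact Copen| exact Ccov]|].
    intros U [V [S [Us [W [s [HG ->]]]]]].
    destruct HG as [HVo [[HUo [HUc HUd]] [Hh [HWo [HWV Href]]]]].
    destruct (Href s) as [A [HA HAp]]. exists A. split; auto. intros z [H1 H2]. auto.
  - split; [split; [exact Copen| exact Ccov]|split].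
    + intros U HC. split; [apply Copen; exact HC|].
      destruct (Cslice U HC) as [S [Us' [t [_ [H1 [H2 H3]]]]]].
      exists S, Us', t. auto.
    + intros U HC.
      destruct (Cslice U HC) as [S [Us' [t [H0 [H1 [H2 H3]]]]]].
      exists S, Us'. auto.
Qed.
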